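(* There exists an instance of \textsc{MaxMSReco}, i.e., a monotone submodular $f:2^{[n]}\to\mathbb{R}_+$ and $X,Y\in\binom{[n]}{k}$, such that the optimal reconfiguration sequence $\mathcal{S}^*$ from $X$ to $Y$ under token jumping has $f(\mathcal{S}^* )=1$, while every reconfiguration sequence $\mathcal{S}$ from $X$ to $Y$ under token jumping all of whose sets are subsets of $X\cup Y$ has $f(\mathcal{S})\le\frac34$. (In particular the optimal sequence must use elements outside $X\cup Y$.)
   Context: $f$ is submodular if $f(S)+f(T)\ge f(S\cap T)+f(S\cup T)$ and monotone if $f(S)\le f(T)$ for $S\subseteq T$. Two sets are adjacent under token jumping if they have the same size $s$ and intersection of size $s-1$. A reconfiguration sequence from $X$ to $Y$ is a sequence of sets starting at $X$, ending at $Y$, with consecutive sets adjacent; its value is the minimum of $f$ over its sets. \textsc{MaxMSReco} asks for a reconfiguration sequence under token jumping maximizing this value. *)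

(* Defs.v *)
From HB Require Import structures.
From mathcomp Require Import all_boot all_order all_algebra.
From mathcomp Require Import reals.
Set Implicit Arguments. Unset Strict Implicit. Unset Printing Implicit Defensive.
Import Order.TTheory GRing.Theory Num.Theory.
Local Open Scope ring_scope.

Definition submodular (R : realType) (n : nat) (f : {set 'I_n} -> R) : Prop :=
  forall S T : {set 'I_n}, f (S :&: T) + f (S :|: T) <= f S + f T.

Definition monotone (R : realType) (n : nat) (f : {set 'I_n} -> R) : Prop :=
  forall S T : {set 'I_n}, S \subset T -> f S <= f T.

Definition nonneg (R : realType) (n : nat) (f : {set 'I_n} -> R) : Prop :=
  forall S : {set 'I_n}, 0 <= f S.

(* Token-jumping adjacency: same size s, intersection of size s-1
   (written without truncated subtraction). *)
Definition tj_adj (n : nat) (S T : {set 'I_n}) : bool :=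
  (#|S| == #|T|)%N && (#|S :&: T|.+1 == #|S|)%N.

(* A reconfiguration sequence from X to Y is represented as X :: s:
   it starts at X, each consecutive pair is adjacent, and it ends at Y. *)
Definition reco_seq (n : nat) (X Y : {set 'I_n}) (s : seq {set 'I_n}) : Prop :=
  path (@tj_adj n) X s /\ last X s = Y.

Definition seq_value (R : realType) (n : nat) (f : {set 'I_n} -> R)
  (X : {set 'I_n}) (s : seq {set 'I_n}) : R :=
  foldr (fun S m => Num.min (f S) m) (f X) s.

(* Main.v *)
Require Import Defs.
From HB Require Import structures.
From mathcomp Require Import all_boot all_order all_algebra.
From mathcomp Require Import reals.
Import Order.TTheory GRing.Theory Num.Theory.
Local Open Scope ring_scope.

Definition cov (i j : nat) : bool :=
  match i, j with
  | 0, (0|1) => true | 1, (2|3) => true | 2, (0|2) => true | 3, (1|3) => true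
  | 4, _ => true | _, _ => false end.
Definition cover (S : {set 'I_5}) : {set 'I_4} :=
  [set j : 'I_4 | [exists i in S, cov (val i) (val j)]].
Definition Xs : {set 'I_5} := [set i | (val i < 2)%N].
Definition Ys : {set 'I_5} := [set i | (1 < val i < 4)%N].
Definition A1 : {set 'I_5} := [set i | (val i == 0)%N || (val i == 4)%N].
Definition A2 : {set 'I_5} := [set i | (val i == 2)%N || (val i == 4)%N].
Definition fc (R : realType) (S : {set 'I_5}) : R := (#|cover S|)%:R / 4.

Lemma card5 (A : {set 'I_5}) : #|A| = \sum_(i < 5) ((i \in A) : nat).
Proof. by rewrite -sum1_card big_mkcond /=; apply: eq_bigr => i _; case: (i \in A). Qed.

Lemma coverU (S T : {set 'I_5}) : cover (S :|: T) \subset cover S :|: cover T.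
Proof.
apply/subsetP => j; rewrite !inE => /existsP[i /andP[]].
by rewrite inE => /orP[iS|iT] c; apply/orP; [left|right]; apply/existsP; exists i; rewrite ?iS ?iT.
Qed.

Lemma coverI (S T : {set 'I_5}) : cover (S :&: T) \subset cover S :&: cover T.
Proof.
apply/subsetP => j; rewrite !inE => /existsP[i /andP[]].
by rewrite inE => /andP[iS iT] c; apply/andP; split; apply/existsP; exists i; rewrite ?iS ?iT.
Qed.

Lemma coverS (S T : {set 'I_5}) : S \subset T -> cover S \subset cover T.
Proof.
move=> /subsetP sST; apply/subsetP => j; rewrite !inE => /existsP[i /andP[iS c]].
by apply/existsP; exists i; rewrite sST.
Qed.

Lemma cover_full (S : {set 'I_5}) : (4 < 5)%N -> Ordinal (isT : (4 < 5)%N) \in S -> cover S = setT.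
Proof.
move=> _ H; apply/setP => j; rewrite !inE; apply/existsP; exists (Ordinal (isT : (4 < 5)%N)).
by rewrite H; case: j => [[|[|[|[|?]]]] ?].
Qed.

Lemma coverX : cover Xs = setT.
Proof.
apply/setP => -[[|[|[|[|?]]]] Hj]; rewrite !inE //; apply/existsP.
- by exists (Ordinal (isT : (0 < 5)%N)); rewrite inE.
- by exists (Ordinal (isT : (0 < 5)%N)); rewrite inE.
- by exists (Ordinal (isT : (1 < 5)%N)); rewrite inE.
- by exists (Ordinal (isT : (1 < 5)%N)); rewrite inE.
Qed.

Lemma coverY : cover Ys = setT.
Proof.
apply/setP => -[[|[|[|[|?]]]] Hj]; rewrite !inE //; apply/existsP.
- by exists (Ordinal (isT : (2 < 5)%N)); rewrite inE.
- by exists (Ordinal (isT : (3 < 5)%N)); rewrite inE.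
- by exists (Ordinal (isT : (2 < 5)%N)); rewrite inE.
- by exists (Ordinal (isT : (3 < 5)%N)); rewrite inE.
Qed.

Lemma card_full : #|[set: 'I_4]| = 4%N.
Proof. by rewrite cardsT card_ord. Qed.

Lemma bad (S : {set 'I_5}) : S \subset Xs :|: Ys -> #|S| = 2%N -> #|S :&: Xs| = 1%N ->
  (#|cover S| <= 3)%N.
Proof.
move=> sub c2 c1.
have cD : #|S :\: Xs| = 1%N.
  by have := cardsID Xs S; rewrite c2 c1 => /eqP; rewrite eqn_add2l => /eqP.
have [x Ex] := cards1P (introT eqP c1).
have [y Ey] := cards1P (introT eqP cD).
have xX : x \in Xs.
  have : x \in S :&: Xs by rewrite Ex set11.
  by rewrite inE => /andP[].
have yY : y \in Ys.
  have : y \in S :\: Xs by rewrite Ey set11.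
  rewrite inE => /andP[yn yS]; move/subsetP: sub => /(_ y yS).
  by rewrite inE (negbTE yn).
have memS i : i \in S -> i = x \/ i = y.
  move=> iS; case iX: (i \in Xs).
    by left; apply/set1P; rewrite -Ex inE iS iX.
  by right; apply/set1P; rewrite -Ey inE iS iX.
suff [j [njx njy]] : exists j : 'I_4, ~~ cov (val x) (val j) /\ ~~ cov (val y) (val j).
  have : cover S \subset [set~ j].
    apply/subsetP => k; rewrite !inE => /existsP[i /andP[iS c]].
    apply/eqP => kj; subst k; case: (memS i iS) => ?; subst i.
      by rewrite c in njx.
    by rewrite c in njy.
  by move/subset_leq_card; rewrite cardsC1 card_ord.
move: xX yY; rewrite !inE.
case: x {Ex memS} => [[|[|?]] Hx] //=; case: y {Ey} => [[|[|[|[|?]]]] Hy] //= _ _.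
- by exists (Ordinal (isT : (3 < 4)%N)).
- by exists (Ordinal (isT : (2 < 4)%N)).
- by exists (Ordinal (isT : (1 < 4)%N)).
- by exists (Ordinal (isT : (0 < 4)%N)).
Qed.

Lemma seq_value_le (R : realType) (f : {set 'I_5} -> R) (X : {set 'I_5}) s :
  seq_value f X s <= f X.
Proof.
elim: s => [|S s IH] /=; first by [].
by rewrite ge_min IH orbT.
Qed.

Theorem mainTheorem9 (R : realType) :
  exists (n k : nat) (f : {set 'I_n} -> R) (X Y : {set 'I_n}),
    [/\ nonneg f, monotone f, submodular f, #|X| = k & #|Y| = k] /\
    (exists s, reco_seq X Y s /\ seq_value f X s = 1 /\
       (forall s', reco_seq X Y s' -> seq_value f X s' <= 1)) /\
    (forall s, reco_seq X Y s ->
       (forall S, S \in X :: s -> S \subset X :|: Y) ->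
       seq_value f X s <= 3 / 4).
Proof.
have f1 S : cover S = setT -> fc R S = 1.
  by rewrite /fc => ->; rewrite card_full divff // pnatr_eq0.
exists 5%N, 2%N, (@fc R), Xs, Ys; split; [split|split].
- by move=> S; rewrite /fc divr_ge0 // ler0n.
- move=> S T /coverS /subset_leq_card H.
  by rewrite /fc ler_pM2r ?invr_gt0 ?ltr0n // ler_nat.
- move=> S T; rewrite /fc -!mulrDl -!natrD ler_pM2r ?invr_gt0 ?ltr0n // ler_nat.
  apply: leq_trans _ (eq_leq (cardsUI (cover S) (cover T))).
  rewrite addnC; apply: leq_add; apply: subset_leq_card;
    [exact: coverU | exact: coverI].
- by rewrite card5 !big_ord_recr big_ord0 /= !inE.
- by rewrite card5 !big_ord_recr big_ord0 /= !inE.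
- exists [:: A1; A2; Ys]; split; [split|split].
  + rewrite /= /tj_adj.
    by rewrite !card5 !big_ord_recr !big_ord0 /= !inE.
  + by [].
  + rewrite /seq_value /= !f1 ?minxx // ?coverX ?coverY //.
    * by apply: cover_full => //; rewrite inE.
    * by apply: cover_full => //; rewrite inE.
  + move=> s' _; apply: (le_trans (@seq_value_le R (fc R) Xs s')).
    by rewrite f1 // coverX.
- move=> [|S s] [Hp Hl] Hs.
    move: Hl => /= /setP /(_ (Ordinal (isT : (0 < 5)%N))); by rewrite !inE.
  move: Hp => /= /andP[/andP[/eqP e2 /eqP e1] _].
  rewrite /seq_value /= ge_min; apply/orP; left.
  have sub : S \subset Xs :|: Ys by apply: Hs; rewrite !inE eqxx orbT.
  have cS : #|S| = 2%N.
    by rewrite -e2 card5 !big_ord_recr big_ord0 /= !inE.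
  have cI : #|S :&: Xs| = 1%N.
    by move: e1; rewrite setIC e2 cS => -[].
  have H := @bad S sub cS cI.
  by rewrite /fc ler_pM2r ?invr_gt0 ?ltr0n // ler_nat.
Qed.
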